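(* Let $\lambda>0$, $M_y,M_z\ge1$, $d_y,d_z>0$, $k_z(m)=(m\bmod M_z)d_z$, $k_y(m)=\lfloor m/M_z\rfloor d_y$ for $m=0,\dots,M_yM_z-1$, and $\tilde\phi_m(\varphi,\theta,r)=k_z(m)\sin\theta+k_y(m)\sin\varphi\cos\theta-\frac{k_y(m)^2+k_z(m)^2}{2r}$. Suppose $K$ users are located at $(\varphi_o,\theta_k,r_k)$, $k=1,\dots,K$, all with the same azimuth $\varphi_o\in[-\pi/2,\pi/2]$, elevations $\theta_k\in[-\pi/2,\pi/2]$ and $r_k>0$. Let $p,q,v\in\{1,\dots,K\}$ satisfy $|\sin\theta_p-\sin\theta_q+\sin\theta_v|<1$; set $\theta_{pqv}=\arcsin(\sin\theta_p-\sin\theta_q+\sin\theta_v)$, and suppose moreover $\left|\frac{\sin\varphi_o}{\cos\theta_{pqv}}(\cos\theta_p-\cos\theta_q+\cos\theta_v)\right|\le1$ and $\frac1{r_p}-\frac1{r_q}+\frac1{r_v}>0$. Define the third-order focal point by $\varphi_{pqv}=\arcsin\left(\frac{\sin\varphi_o\cos\theta_p-\sin\varphi_o\cos\theta_q+\sin\varphi_o\cos\theta_v}{\cos\theta_{pqv}}\right)$ and $r_{pqv}=\left(\frac1{r_p}-\frac1{r_q}+\frac1{r_v}\right)^{-1}$. Then $$\theta_{pqv}=\arcsin(\sin\theta_p-\sin\theta_q+\sin\theta_v),\quad \varphi_{pqv}=\arcsin\left(\frac{\sin\varphi_o}{\cos\theta_{pqv}}(\cos\theta_p-\cos\theta_q+\cos\theta_v)\right),\quad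 r_{pqv}=\left(\frac1{r_p}-\frac1{r_q}+\frac1{r_v}\right)^{-1},$$ and $\tilde\phi_m(\varphi_o,\theta_p,r_p)-\tilde\phi_m(\varphi_o,\theta_q,r_q)+\tilde\phi_m(\varphi_o,\theta_v,r_v)=\tilde\phi_m(\varphi_{pqv},\theta_{pqv},r_{pqv})$ for all $m$; i.e., the third-order distortion is focused at these points.
   Context: Uniform planar array in the $yz$-plane transmitting $x_m[n]=\sum_k e^{-j\frac{2\pi}{\lambda}\tilde\phi_m(\varphi_k,\theta_k,r_k)}s_k[n]$ (Fresnel near-field model); the third-order distortion is the term $x_m|x_m|^2=\sum_{p,q,v}s_ps_q^*s_v\,e^{-j\frac{2\pi}{\lambda}(\tilde\phi_m(p)-\tilde\phi_m(q)+\tilde\phi_m(v))}$, and its focal points are the points whose Fresnel phase equals the alternating phase sum. The paper states the formulas as approximations of the true near-field focal points; within the Fresnel model they are exact. *)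

(* Defs.v *)
From Stdlib Require Import Reals Lra Lia.
Open Scope R_scope.

Definition kz (Mz : nat) (dz : R) (m : nat) : R := INR (Nat.modulo m Mz) * dz.
Definition ky (Mz : nat) (dy : R) (m : nat) : R := INR (Nat.div m Mz) * dy.

Definition phit (Mz : nat) (dy dz : R) (m : nat) (ph th r : R) : R :=
  kz Mz dz m * sin th + ky Mz dy m * sin ph * cos th
  - (ky Mz dy m ^ 2 + kz Mz dz m ^ 2) / (2 * r).

Definition theta3 (thp thq thv : R) : R := asin (sin thp - sin thq + sin thv).
Definition phi3 (pho thp thq thv : R) : R :=
  asin ((sin pho * cos thp - sin pho * cos thq + sin pho * cos thv)
        / cos (theta3 thp thq thv)).
Definition r3 (rp rq rv : R) : R := / (/ rp - / rq + / rv).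

(* Main.v *)
Require Import Defs.
From Stdlib Require Import Reals Lra Psatz.
Open Scope R_scope.

Lemma abs_le_inv (x a : R) : Rabs x <= a -> -a <= x <= a.
Proof. intros H. unfold Rabs in H. destruct (Rcase_abs x); lra. Qed.

Theorem corollary4
  (lambda : R) (My Mz : nat) (dy dz : R) (K : nat)
  (pho : R) (theta r : nat -> R) (p q v : nat) :
  0 < lambda -> (1 <= My)%nat -> (1 <= Mz)%nat -> 0 < dy -> 0 < dz ->
  -(PI/2) <= pho <= PI/2 ->
  (forall k, (1 <= k <= K)%nat -> -(PI/2) <= theta k <= PI/2 /\ 0 < r k) ->
  (1 <= p <= K)%nat -> (1 <= q <= K)%nat -> (1 <= v <= K)%nat ->
  Rabs (sin (theta p) - sin (theta q) + sin (theta v)) < 1 ->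
  Rabs (sin pho / cos (theta3 (theta p) (theta q) (theta v))
        * (cos (theta p) - cos (theta q) + cos (theta v))) <= 1 ->
  0 < / r p - / r q + / r v ->
  theta3 (theta p) (theta q) (theta v)
    = asin (sin (theta p) - sin (theta q) + sin (theta v)) /\
  phi3 pho (theta p) (theta q) (theta v)
    = asin (sin pho / cos (theta3 (theta p) (theta q) (theta v))
            * (cos (theta p) - cos (theta q) + cos (theta v))) /\
  r3 (r p) (r q) (r v) = / (/ r p - / r q + / r v) /\
  (forall m, (m < My * Mz)%nat ->
     phit Mz dy dz m pho (theta p) (r p) - phit Mz dy dz m pho (theta q) (r q)
     + phit Mz dy dz m pho (theta v) (r v)
     = phit Mz dy dz m (phi3 pho (theta p) (theta q) (theta v))
                       (theta3 (theta p) (theta q) (theta v))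
                       (r3 (r p) (r q) (r v))).
Proof.
  intros _ _ _ _ _ _ Hk Hp Hq Hv HS HX HD.
  split; [reflexivity|]. split.
  { unfold phi3. f_equal. unfold Rdiv. ring. }
  split; [reflexivity|].
  intros m _.
  destruct (Hk p Hp) as [_ Hrp]. destruct (Hk q Hq) as [_ Hrq].
  destruct (Hk v Hv) as [_ Hrv].
  set (S := sin (theta p) - sin (theta q) + sin (theta v)) in *.
  assert (HS1 : -1 <= S <= 1) by (apply abs_le_inv; lra).
  assert (Hs : sin (theta3 (theta p) (theta q) (theta v)) = S)
    by (unfold theta3; apply sin_asin; exact HS1).
  assert (Hc : 0 < cos (theta3 (theta p) (theta q) (theta v))).
  { unfold theta3; fold S; rewrite cos_asin by exact HS1.
    apply sqrt_lt_R0.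
    assert (-1 < S < 1) by (unfold Rabs in HS; destruct (Rcase_abs S); lra).
    unfold Rsqr; nra. }
  set (c := cos (theta3 (theta p) (theta q) (theta v))) in *.
  assert (Hsp : sin (phi3 pho (theta p) (theta q) (theta v)) =
     sin pho / c * (cos (theta p) - cos (theta q) + cos (theta v))).
  { unfold phi3. fold c.
    replace ((sin pho * cos (theta p) - sin pho * cos (theta q) + sin pho * cos (theta v)) / c)
      with (sin pho / c * (cos (theta p) - cos (theta q) + cos (theta v)))
      by (unfold Rdiv; ring).
    apply sin_asin. apply abs_le_inv. exact HX. }
  unfold phit. rewrite Hs, Hsp. fold c. unfold r3, S.
  assert (HE : (r q - r p) * r v + r p * r q = (/ r p - / r q + / r v) * (r p * r q * r v))
    by (field; repeat split; lra).
  assert (0 < r p * r q * r v) by (repeat apply Rmult_lt_0_compat; lra).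
  field. rewrite HE. repeat split; try lra; nra.
Qed.
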